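(* Let $\Phi$ be irreducible with highest root $\gamma$ and $\mathfrak h_\gamma=\Phi^+\setminus\{\gamma\}$. Let $v,w\in W$ with $v>w$ in Bruhat order. Then $\ell_\gamma(w)=\ell_\gamma(v)$ if and only if all of the following hold: $v$ is a cover of $w$; $N_w=N^\gamma_w$; and there exists $\beta\in N_v$ with $v^{-1}\beta=-\gamma$.
   Context: $\Phi$ is a crystallographic root system in a real Euclidean space with base $\Delta$, positive roots $\Phi^+$, $\Phi^-=-\Phi^+$, Weyl group $W$ with length $\ell$; $s_\alpha$ is the reflection through $\alpha$. $\Phi$ irreducible means it is not a disjoint union of two root systems; then there is a unique highest root $\gamma\in\Phi^+$ with $\alpha\prec\gamma$ for all $\alpha\in\Phi$, where $\alpha\prec\beta$ means $\beta-\alpha$ is a sum of positive roots. For $w\in W$, $N_w=\{\beta\in\Phi^+: w^{-1}\beta\in\Phi^-\}$, $N^\gamma_w=\{\beta\in\Phi^+: w^{-1}\beta\in-\mathfrak h_\gamma\}$, and $\ell_\gamma(w)=|N^\gamma_w|$. The Bruhat graph has vertex set $W$ and edges $u\to s_\alpha u$ for $\alpha\in\Phi^+$ with $(s_\alpha u)^{-1}\alpha\in\Phi^-$; Bruhat order $<$ is the transitive closure. $v$ is a cover of $w$ if $v=s_\alpha w$ with $w\to v$ a Bruhat graph edge and $\ell(v)=\ell(w)+1$. *)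

(* Defs.v *)
From HB Require Import structures.
From mathcomp Require Import all_boot all_order all_algebra.
From mathcomp Require Import reals.
From Stdlib Require Import ClassicalDescription Relation_Operators.
Set Implicit Arguments. Unset Strict Implicit. Unset Printing Implicit Defensive.
Import Order.TTheory GRing.Theory Num.Theory.
Local Open Scope ring_scope.

Definition pb (P : Prop) : bool :=
  if excluded_middle_informative P then true else false.

Section RootSystems.
Variables (R : realType) (n : nat).
Notation V := 'cV[R]_n.

Definition dot (u v : V) : R := (u^T *m v) 0 0.

(* the reflection s_alpha as a matrix: s_alpha x = x - 2(x,a)/(a,a) a *)
Definition refl (a : V) : 'M[R]_n :=
  1%:M - (2 / dot a a) *: (a *m a^T).

Definition root_system (Phi : seq V) : Prop :=
  [/\ uniq Phi /\ 0 \notin Phi,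
      (forall x : V, exists c : nat -> R,
          x = \sum_(i < size Phi) c i *: Phi`_i),
      (forall a, a \in Phi -> forall c : R, c *: a \in Phi -> c = 1 \/ c = -1),
      (forall a b, a \in Phi -> b \in Phi -> refl a *m b \in Phi) &
      (forall a b, a \in Phi -> b \in Phi ->
          exists z : int, 2 * dot b a / dot a a = z%:~R)].

Definition irreducible_rs (Phi : seq V) : Prop :=
  Phi != [::] /\
  forall P : pred V,
    (forall a b, a \in Phi -> b \in Phi -> P a -> ~~ P b -> dot a b = 0) ->
    (all P Phi \/ all (predC P) Phi).

Definition nonneg_comb (Delta : seq V) (x : V) : Prop :=
  exists c : nat -> nat, x = \sum_(i < size Delta) (c i)%:R *: Delta`_i.

Definition is_base (Phi Delta : seq V) : Prop :=
  [/\ {subset Delta <= Phi},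
      (forall c : nat -> R, \sum_(i < size Delta) c i *: Delta`_i = 0 ->
          forall i, (i < size Delta)%N -> c i = 0) &
      (forall b, b \in Phi -> nonneg_comb Delta b \/ nonneg_comb Delta (- b))].

Definition posroot (Phi Delta : seq V) (x : V) : Prop :=
  x \in Phi /\ nonneg_comb Delta x.
Definition negroot (Phi Delta : seq V) (x : V) : Prop :=
  posroot Phi Delta (- x).

Definition prec (Phi Delta : seq V) (a b : V) : Prop :=
  exists s : seq V, (forall x, x \in s -> posroot Phi Delta x) /\
                    b - a = \sum_(x <- s) x.

Definition highest_root (Phi Delta : seq V) (g : V) : Prop :=
  posroot Phi Delta g /\ forall a, a \in Phi -> prec Phi Delta a g.

Inductive in_W (Phi : seq V) : 'M[R]_n -> Prop :=
| W_one : in_W Phi 1%:M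
| W_refl a M : a \in Phi -> in_W Phi M -> in_W Phi (refl a *m M).

Definition simple_word (Delta : seq V) (w : 'M[R]_n) (k : nat) : Prop :=
  exists s : seq V, [/\ size s = k, {subset s <= Delta} &
                        w = foldr (fun a M => refl a *m M) 1%:M s].

Definition cox_length (Delta : seq V) (w : 'M[R]_n) (k : nat) : Prop :=
  simple_word Delta w k /\ forall k', simple_word Delta w k' -> (k <= k')%N.

Definition N_set (Phi Delta : seq V) (w : 'M[R]_n) (b : V) : Prop :=
  posroot Phi Delta b /\ negroot Phi Delta (invmx w *m b).

Definition neg_hg (Phi Delta : seq V) (g x : V) : Prop :=
  posroot Phi Delta (- x) /\ - x != g.

Definition Ng_set (Phi Delta : seq V) (g : V) (w : 'M[R]_n) (b : V) : Prop :=
  posroot Phi Delta b /\ neg_hg Phi Delta g (invmx w *m b).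

Definition ell_g (Phi Delta : seq V) (g : V) (w : 'M[R]_n) : nat :=
  count (fun b => pb (Ng_set Phi Delta g w b)) Phi.

Definition bruhat_edge (Phi Delta : seq V) (u v : 'M[R]_n) : Prop :=
  exists a, [/\ posroot Phi Delta a, v = refl a *m u &
                negroot Phi Delta (invmx v *m a)].

Definition bruhat_lt (Phi Delta : seq V) (w v : 'M[R]_n) : Prop :=
  in_W Phi w /\ clos_trans _ (bruhat_edge Phi Delta) w v.

Definition is_cover (Phi Delta : seq V) (w v : 'M[R]_n) : Prop :=
  bruhat_edge Phi Delta w v /\
  exists k, cox_length Delta w k /\ cox_length Delta v k.+1.

End RootSystems.

(* Main.v *)
Require Import Defs.
From HB Require Import structures.
From mathcomp Require Import all_boot all_order all_algebra.
From mathcomp Require Import reals.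
From mathcomp Require Import ring lra zify.
From Stdlib Require Import ClassicalDescription Relation_Operators Operators_Properties.
Set Implicit Arguments. Unset Strict Implicit. Unset Printing Implicit Defensive.
Import Order.TTheory GRing.Theory Num.Theory.
Local Open Scope ring_scope.

Section Mat.
Variables (R : realType) (n : nat).
Notation V := 'cV[R]_n.

Lemma dotC (u v : V) : dot u v = dot v u.
Proof. by rewrite /dot -{1}(trmxK v) -trmx_mul mxE. Qed.

Lemma dotDl (u v x : V) : dot (u + v) x = dot u x + dot v x.
Proof. by rewrite /dot linearD /= mulmxDl mxE. Qed.

Lemma dotZl (c : R) (u x : V) : dot (c *: u) x = c * dot u x.
Proof. by rewrite /dot linearZ /= -scalemxAl mxE. Qed.

Lemma dotNl (u x : V) : dot (- u) x = - dot u x.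
Proof. by rewrite -scaleN1r dotZl mulN1r. Qed.

Lemma dotBl (u v x : V) : dot (u - v) x = dot u x - dot v x.
Proof. by rewrite dotDl dotNl. Qed.

Lemma dot_sum I (r : seq I) (P : pred I) (F : I -> V) x :
  dot (\sum_(i <- r | P i) F i) x = \sum_(i <- r | P i) dot (F i) x.
Proof.
elim/big_rec2: _ => [|i y1 y2 _ <-]; last by rewrite dotDl.
by rewrite /dot linear0 mul0mx mxE.
Qed.

Lemma dot_ge0 (u : V) : 0 <= dot u u.
Proof.
rewrite /dot mxE; apply: sumr_ge0 => i _; rewrite mxE; exact: sqr_ge0.
Qed.

Lemma dot_eq0 (u : V) : (dot u u == 0) = (u == 0).
Proof.
apply/idP/idP=> [|/eqP->]; last by rewrite /dot mulmx0 mxE.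
rewrite /dot mxE => /eqP H; apply/eqP/matrixP => i j.
rewrite (ord1 j) mxE.
have H0 : forall k, true -> 0 <= (u^T 0 k * u k 0).
  by move=> k _; rewrite mxE; exact: sqr_ge0.
move/eqP: H; rewrite psumr_eq0 // => /allP /(_ i (mem_index_enum _)).
by rewrite mxE mulf_eq0 orbb => /eqP.
Qed.

Lemma dot_gt0 (u : V) : u != 0 -> 0 < dot u u.
Proof. by move=> Hu; rewrite lt_def dot_eq0 Hu dot_ge0. Qed.

Lemma refl_mul (a x : V) : refl a *m x = x - (2 / dot a a * dot a x) *: a.
Proof.
rewrite /refl mulmxBl mul1mx -scalemxAl -mulmxA [a^T *m x]mx11_scalar.
by rewrite mul_mx_scalar scalerA.
Qed.

Lemma refl_tr (a : V) : (refl a)^T = refl a.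
Proof. by rewrite /refl linearB /= trmx1 linearZ /= trmx_mul trmxK. Qed.

Lemma aaT_sq (a : V) : (a *m a^T) *m (a *m a^T) = dot a a *: (a *m a^T).
Proof.
by rewrite mulmxA -(mulmxA a) [a^T *m a]mx11_scalar mul_mx_scalar -scalemxAl.
Qed.

Lemma refl_invol (a : V) : a != 0 -> refl a *m refl a = 1%:M.
Proof.
move=> Ha; have d0 : dot a a != 0 by rewrite dot_eq0.
rewrite /refl mulmxBl mul1mx mulmxBr mulmx1 -scalemxAl -scalemxAr aaT_sq.
rewrite !scalerA.
set c := 2 / dot a a.
have -> : c * c * dot a a = c + c.
  by rewrite /c; field.
by rewrite scalerDl opprB addrK subrK.

Qed.

Definition orth (w : 'M[R]_n) := w^T *m w = 1%:M /\ w *m w^T = 1%:M.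

Lemma orth1 : orth 1%:M.
Proof. by rewrite /orth trmx1 mul1mx. Qed.

Lemma orth_refl (a : V) : a != 0 -> orth (refl a).
Proof. by move=> Ha; rewrite /orth refl_tr refl_invol. Qed.

Lemma orthM (u w : 'M[R]_n) : orth u -> orth w -> orth (u *m w).
Proof.
move=> [u1 u2] [w1 w2]; split; rewrite trmx_mul.
  by rewrite mulmxA -(mulmxA w^T) u1 mulmx1 w1.
by rewrite mulmxA -(mulmxA u) w2 mulmx1 u2.
Qed.

Lemma orth_tr (w : 'M[R]_n) : orth w -> orth w^T.
Proof. by move=> [w1 w2]; split; rewrite trmxK. Qed.

Lemma orth_inv (w : 'M[R]_n) : orth w -> invmx w = w^T.
Proof.
move=> [w1 w2]; have [_ Hu] := mulmx1_unit w1.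
by rewrite -[RHS]mulmx1 -(mulmxV Hu) mulmxA w1 mul1mx.
Qed.

Lemma orth_dot (w : 'M[R]_n) (x y : V) : orth w -> dot (w *m x) (w *m y) = dot x y.
Proof. by move=> [w1 _]; rewrite /dot trmx_mul mulmxA -(mulmxA x^T) w1 mulmx1. Qed.

Lemma refl_conj (w : 'M[R]_n) (a : V) : orth w ->
  w *m refl a *m w^T = refl (w *m a).
Proof.
move=> Hw; have [_ w2] := Hw.
rewrite /refl mulmxBr mulmx1 mulmxBl w2 -scalemxAr -scalemxAl.
by rewrite -/(dot (w *m a) (w *m a)) orth_dot // !mulmxA trmx_mul mulmxA.
Qed.

Lemma reflN (a : V) : refl (- a) = refl a.
Proof.
by rewrite /refl dotNl dotC dotNl opprK linearN /= mulNmx mulmxN opprK.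
Qed.

Lemma refl_self (a : V) : a != 0 -> refl a *m a = - a.
Proof.
move=> Ha; rewrite refl_mul mulrAC -mulrA divff ?dot_eq0 // mulr1.
by rewrite scaler_nat mulr2n opprD addrA subrr sub0r.
Qed.

End Mat.
Lemma pbP (P : Prop) : reflect P (pb P).
Proof. by rewrite /pb; case: excluded_middle_informative => H; constructor. Qed.

Lemma pb_eq (P Q : Prop) : (P <-> Q) -> pb P = pb Q.
Proof. by move=> [H1 H2]; apply/pbP/pbP. Qed.


Lemma count_1pt (T : eqType) (s : seq T) (a : T) (P Q : pred T) :
  uniq s -> a \in s -> {in s, forall x, x != a -> P x = Q x} ->
  (count P s + Q a = count Q s + P a)%N.
Proof.
elim: s => //= x s IH /andP[xs us]; rewrite inE => Ha H.
case: (eqVneq x a) => [Exa|Hxa].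
  subst x; rewrite (@eq_in_count _ P Q s); first lia.
  move=> y ys; apply: H; first by rewrite inE ys orbT.
  by apply: contraNneq xs => <-.
have as' : a \in s by move: Ha; rewrite eq_sym (negbTE Hxa).
have -> : P x = Q x by apply: H => //; rewrite inE eqxx.
rewrite -!addnA IH //; last by move=> y ys; apply: H => //; rewrite inE ys orbT.
Qed.

Lemma count_2pt (T : eqType) (s : seq T) (a b : T) (P Q : pred T) :
  uniq s -> a \in s -> b \in s -> a != b ->
  {in s, forall x, x != a -> x != b -> P x = Q x} ->
  (count P s + Q a + Q b = count Q s + P a + P b)%N.
Proof.
move=> us as' bs ab H.
pose S x := if x == a then Q a else P x.
have E1 : (count P s + Q a = count S s + P a)%N.
  have -> : Q a = S a by rewrite /S eqxx.
  by apply: count_1pt => // x _ xa; rewrite /S (negbTE xa).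
have E2 : (count S s + Q b = count Q s + P b)%N.
  have -> : P b = S b by rewrite /S eq_sym (negbTE ab).
  apply: count_1pt => // x xs xb; rewrite /S; case: eqP => [->|/eqP xa]; first by [].
  by apply: H.
lia.
Qed.
Lemma count_perm (T : eqType) (s : seq T) (f : T -> T) (P : pred T) :
  uniq s -> {in s &, injective f} -> {in s, forall x, f x \in s} ->
  count P s = count (P \o f) s.
Proof.
move=> us finj fs.
have um : uniq (map f s) by rewrite map_inj_in_uniq.
have sub : {subset map f s <= s} by move=> y /mapP[x xs ->]; exact: fs.
have Hsz : (size s <= size (map f s))%N by rewrite size_map.
have [_ Heq] := uniq_min_size um sub Hsz.
have /permP Hp : perm_eq (map f s) s by apply: uniq_perm.
by rewrite -Hp count_map.
Qed.

Section Roots.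
Variables (R : realType) (n : nat) (Phi Delta : seq 'cV[R]_n).
Notation V := 'cV[R]_n.
Hypothesis HPhi : root_system Phi.
Hypothesis HD : is_base Phi Delta.
Notation pos := (posroot Phi Delta).
Notation neg := (negroot Phi Delta).
Notation m := (size Delta).

Lemma Phi_uniq : uniq Phi. Proof. by case: HPhi => -[]. Qed.
Lemma Phi_0 : 0 \notin Phi. Proof. by case: HPhi => -[]. Qed.
Lemma Phi_neq0 a : a \in Phi -> a != 0.
Proof. by apply: contraTneq => ->; exact: Phi_0. Qed.
Lemma refl_Phi a b : a \in Phi -> b \in Phi -> refl a *m b \in Phi.
Proof. by case: HPhi => _ _ _ H _; exact: H. Qed.
Lemma PhiN a : a \in Phi -> - a \in Phi.
Proof. by move=> Ha; rewrite -refl_self ?Phi_neq0 // refl_Phi. Qed.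
Lemma Phi_red a c : a \in Phi -> c *: a \in Phi -> c = 1 \/ c = -1.
Proof. case: HPhi => _ _ H _ _ Ha Hc. exact: H Ha _ Hc. Qed.
Lemma Phi_cryst a b : a \in Phi -> b \in Phi ->
  exists z : int, 2 * dot b a / dot a a = z%:~R.
Proof. by case: HPhi => _ _ _ _ H; exact: H. Qed.

Lemma D_sub : {subset Delta <= Phi}. Proof. by case: HD. Qed.
Lemma D_indep (c : nat -> R) : \sum_(i < m) c i *: Delta`_i = 0 ->
  forall i, (i < m)%N -> c i = 0.
Proof. by case: HD => _ H _; exact: H. Qed.

Lemma D_CM (a b : nat -> R) :
  \sum_(i < m) a i *: Delta`_i = \sum_(i < m) b i *: Delta`_i ->
  forall i, (i < m)%N -> a i = b i.
Proof.
move=> H i Hi; apply/eqP; rewrite -subr_eq0; apply/eqP.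
apply: (D_indep (c := fun i => a i - b i)) => //.
by under eq_bigr do rewrite scalerBl; rewrite sumrB H subrr.
Qed.

Lemma D_single (r : R) j : (j < m)%N ->
  r *: Delta`_j = \sum_(i < m) (if (i : nat) == j then r else 0) *: Delta`_i.
Proof.
move=> Hj; rewrite (bigD1 (Ordinal Hj)) //= eqxx big1 ?addr0 // => i.
by rewrite -val_eqE /= => /negbTE ->; rewrite scale0r.
Qed.

Definition cone (x : V) := exists c : nat -> R,
  (forall i, 0 <= c i) /\ x = \sum_(i < m) c i *: Delta`_i.

Lemma cone_add x y : cone x -> cone y -> cone (x + y).
Proof.
move=> [c [c0 ->]] [d [d0 ->]]; exists (fun i => c i + d i); split.
  by move=> i; rewrite addr_ge0.
by rewrite -big_split /=; apply: eq_bigr => i _; rewrite scalerDl.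
Qed.

Lemma cone_scale r x : 0 <= r -> cone x -> cone (r *: x).
Proof.
move=> r0 [c [c0 ->]]; exists (fun i => r * c i); split.
  by move=> i; rewrite mulr_ge0.
by rewrite scaler_sumr; apply: eq_bigr => i _; rewrite scalerA.
Qed.

Lemma nonneg_cone x : nonneg_comb Delta x -> cone x.
Proof. by move=> [c ->]; exists (fun i => (c i)%:R); split. Qed.

Lemma pos_cone x : pos x -> cone x.
Proof. by move=> [_ /nonneg_cone]. Qed.

Lemma cone_anti x : cone x -> cone (- x) -> x = 0.
Proof.
move=> [c [c0 Ex]] [d [d0 Enx]].
have H : \sum_(i < m) (c i + d i) *: Delta`_i = 0.
  by under eq_bigr do rewrite scalerDl; rewrite big_split /= -Ex -Enx subrr.
rewrite Ex big1 // => i _.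
have := @D_indep (fun i => c i + d i) H _ (ltn_ord i) => /eqP; rewrite paddr_eq0 // => /andP[/eqP -> _].
by rewrite scale0r.
Qed.

Lemma pos_Phi x : pos x -> x \in Phi. Proof. by case. Qed.
Lemma neg_Phi x : neg x -> x \in Phi.
Proof. by move=> [/PhiN]; rewrite opprK. Qed.

Lemma pos_or_neg x : x \in Phi -> pos x \/ neg x.
Proof.
move=> Hx; case: HD => _ _ /(_ x Hx) [H|H]; [left|right]; split => //.
exact: PhiN.
Qed.

Lemma pos_neg_excl x : pos x -> neg x -> False.
Proof.
move=> Hp Hn; have := cone_anti (pos_cone Hp) (pos_cone Hn) => E.
by move: (pos_Phi Hp); rewrite E (negbTE Phi_0).
Qed.

Lemma cone_pos x : x \in Phi -> cone x -> pos x.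
Proof.
move=> Hx Hc; case: (pos_or_neg Hx) => // Hn.
have E := cone_anti Hc (pos_cone Hn).
by move: Hx; rewrite E (negbTE Phi_0).
Qed.

Lemma negN x : neg (- x) <-> pos x.
Proof. by rewrite /negroot opprK. Qed.

Lemma posN x : pos (- x) <-> neg x.
Proof. by []. Qed.

Lemma simple_refl_pos a b : a \in Delta -> pos b -> b != a ->
  pos (refl a *m b).
Proof.
move=> Ha Hb Hba.
have aPhi := D_sub Ha; have bPhi := pos_Phi Hb.
case: (pos_or_neg (refl_Phi aPhi bPhi)) => // Hn; exfalso.
have [c Ec] := Hb.2; have [d Ed] := Hn.2.
set j := index a Delta.
have Hj : (j < m)%N by rewrite index_mem.
have Eaj : Delta`_j = a by rewrite nth_index.
set k := 2 / dot a a * dot a b.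
have E : \sum_(i < m) ((c i)%:R + (d i)%:R) *: Delta`_i =
         \sum_(i < m) (if (i : nat) == j then k else 0) *: Delta`_i.
  rewrite -D_single // Eaj.
  under eq_bigr do rewrite scalerDl.
  by rewrite big_split /= -Ec -Ed refl_mul opprB addrCA subrr addr0.
have c0 : forall i, (i < m)%N -> i != j -> c i = 0%N.
  move=> i Hi Hij; have := @D_CM (fun i => (c i)%:R + (d i)%:R) (fun i => if i == j then k else 0) E i Hi; rewrite (negbTE Hij) => /eqP.
  by rewrite -natrD pnatr_eq0 addn_eq0 => /andP[/eqP].
have Eb : b = (c j)%:R *: a.
  rewrite Ec (bigD1 (Ordinal Hj)) //= Eaj big1 ?addr0 // => i.
  rewrite -val_eqE /= => Hij; by rewrite c0 // scale0r.
have bPhi' : (c j)%:R *: a \in Phi by rewrite -Eb.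
have := Phi_red aPhi bPhi'.
case=> [H1|H1].
  by move: Hba; rewrite Eb H1 scale1r eqxx.
have : (0 : R) <= (c j)%:R by [].
rewrite H1; lra.
Qed.

Definition Wgood (w : 'M[R]_n) := [/\ orth w,
  (forall b, b \in Phi -> w *m b \in Phi) &
  (forall b, b \in Phi -> w^T *m b \in Phi)].

Lemma Wgood1 : Wgood 1%:M.
Proof. by split; [exact: orth1 | move=> b; rewrite mul1mx | move=> b; rewrite trmx1 mul1mx]. Qed.

Lemma Wgood_refl a M : a \in Phi -> Wgood M -> Wgood (refl a *m M).
Proof.
move=> Ha [o1 o2 o3]; split.
- by apply: orthM => //; apply: orth_refl; exact: Phi_neq0 Ha.
- by move=> b Hb; rewrite -mulmxA; apply: refl_Phi => //; exact: o2.
- by move=> b Hb; rewrite trmx_mul refl_tr -mulmxA; apply: o3; apply: refl_Phi.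
Qed.

Lemma Wgood_tr w : Wgood w -> Wgood w^T.
Proof. by move=> [o1 o2 o3]; split => //; [exact: orth_tr | rewrite trmxK]. Qed.

Lemma in_W_good w : in_W Phi w -> Wgood w.
Proof. elim=> [|a M Ha _ IH]; [exact: Wgood1 | exact: Wgood_refl]. Qed.

Definition prodw (s : seq V) := foldr (fun a M => refl a *m M) 1%:M s.

Lemma prodw_cat s t : prodw (s ++ t) = prodw s *m prodw t.
Proof. by elim: s => [|a s IH] /=; rewrite ?mul1mx // IH mulmxA. Qed.

Lemma prodw_tr s : (prodw s)^T = prodw (rev s).
Proof.
elim: s => [|a s IH] /=; first by rewrite trmx1.
by rewrite trmx_mul IH refl_tr rev_cons -cats1 prodw_cat /= mulmx1.
Qed.

Lemma prodw_good s : {subset s <= Delta} -> Wgood (prodw s).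
Proof.
elim: s => [|a s IH] Hs /=; first exact: Wgood1.
apply: Wgood_refl; first by apply: (D_sub); apply: Hs; rewrite inE eqxx.
by apply: IH => x Hx; apply: Hs; rewrite inE Hx orbT.
Qed.

Definition nN (w : 'M[R]_n) := count (fun b => pb (N_set Phi Delta w b)) Phi.

Lemma Nset_good w b : Wgood w -> N_set Phi Delta w b <-> pos b /\ neg (w^T *m b).
Proof. by move=> [o _ _]; rewrite /N_set orth_inv. Qed.

Lemma simple_pos a : a \in Delta -> pos a.
Proof.
move=> Ha; split; first exact: D_sub Ha.
exists (fun i => nat_of_bool (i == index a Delta)).
rewrite -[a in LHS]scale1r -{1}(nth_index 0 Ha) (@D_single 1 (index a Delta)) ?index_mem //.
by apply: eq_bigr => i _; case: eqP.
Qed.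

Lemma nN_simple a M : a \in Delta -> Wgood M ->
  (nN (refl a *m M) + pb (N_set Phi Delta M a) =
   nN M + pb (pos (M^T *m a)))%N.
Proof.
move=> Ha HM.
have aPhi := D_sub Ha; have a0 := Phi_neq0 aPhi.
have apos := simple_pos Ha.
have Hfa : Wgood (refl a *m M) by exact: Wgood_refl.
pose f := fun b : V => refl a *m b.
have ff : forall b, f (f b) = b by move=> b; rewrite /f mulmxA refl_invol // mul1mx.
rewrite /nN (@count_perm _ Phi f) //; last first.
- by move=> b Hb; apply: refl_Phi.
- by move=> x y _ _ Hxy; rewrite -(ff x) Hxy ff.
- exact: Phi_uniq.
set P := ((fun b => pb (N_set Phi Delta (refl a *m M) b)) \o f).
set Q := (fun b => pb (N_set Phi Delta M b)).
have naPhi := PhiN aPhi.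
have Hneq : a != - a.
  apply/eqP => E; have : a + a = 0 by rewrite {2}E subrr.
  by rewrite -mulr2n -scaler_nat => /eqP; rewrite scaler_eq0 pnatr_eq0 /= (negbTE a0).
have := @count_2pt _ Phi a (- a) P Q (Phi_uniq) aPhi naPhi Hneq.
have EP : forall b, P b = pb (pos (f b) /\ neg (M^T *m b)).
  move=> b; rewrite /P /=; apply: pb_eq; rewrite Nset_good //.
  by rewrite /f trmx_mul refl_tr -(mulmxA M^T) (mulmxA (refl a)) refl_invol // mul1mx.
have Qa' : Q (- a) = false.
  apply/pbP; rewrite Nset_good // => -[Hp _].
  by apply: (pos_neg_excl apos); rewrite /negroot.
have Pa : P a = false.
  rewrite EP; apply/pbP => -[Hp _]; move: Hp; rewrite /f refl_self //.
  move=> Hp; exact: (pos_neg_excl apos).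
have Pa' : P (- a) = pb (pos (M^T *m a)).
  rewrite EP; apply: pb_eq; rewrite /f mulmxN refl_self // opprK mulmxN.
  by rewrite negN; split => // -[].
rewrite Qa' Pa Pa' addn0 => H; rewrite [LHS]H; first by rewrite /= addn0.
move=> x xPhi xa xna; rewrite EP; apply: pb_eq; rewrite Nset_good //.
have iff1 : pos (f x) <-> pos x.
  split => Hp.
  - rewrite -(ff x); apply: simple_refl_pos => //.
    by apply: contraNneq xna => E; rewrite -(ff x) E /f refl_self.
  - by apply: simple_refl_pos.
by rewrite iff1.
Qed.


Lemma nN1 : nN 1%:M = 0%N.
Proof.
rewrite /nN; apply/eqP; rewrite -leqn0 leqNgt -has_count; apply/hasP => -[b _].
move/pbP; rewrite Nset_good; last exact: Wgood1.
rewrite trmx1 mul1mx => -[H1 H2]; exact: pos_neg_excl H1 H2.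
Qed.

Lemma nN_le s : {subset s <= Delta} -> (nN (prodw s) <= size s)%N.
Proof.
elim: s => [|a s IH] Hs /=; first by rewrite nN1.
have Ha : a \in Delta by apply: Hs; rewrite inE eqxx.
have Hs' : {subset s <= Delta} by move=> x Hx; apply: Hs; rewrite inE Hx orbT.
have := nN_simple Ha (prodw_good Hs'); have := IH Hs'.
case: (pb (N_set _ _ _ _)); case: (pb (pos _)) => /=; lia.
Qed.

Lemma deletion s b : {subset s <= Delta} -> pos b -> neg ((prodw s)^T *m b) ->
  exists t, [/\ {subset t <= Delta}, (size t < size s)%N & refl b *m prodw s = prodw t].
Proof.
elim: s b => [|a s IH] b Hs Hb Hn /=.
  by exfalso; move: Hn; rewrite /= trmx1 mul1mx => Hn; exact: pos_neg_excl Hb Hn.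
have Ha : a \in Delta by apply: Hs; rewrite inE eqxx.
have Hs' : {subset s <= Delta} by move=> x Hx; apply: Hs; rewrite inE Hx orbT.
have aPhi := D_sub Ha; have a0 := Phi_neq0 aPhi.
case: (eqVneq b a) => [->|Hba].
  by exists s; split => //; rewrite mulmxA refl_invol // mul1mx.
have Hb' := simple_refl_pos Ha Hb Hba.
have Hn' : neg ((prodw s)^T *m (refl a *m b)).
  by move: Hn; rewrite /= trmx_mul refl_tr mulmxA.
have [t [Ht1 Ht2 Ht3]] := IH _ Hs' Hb' Hn'.
exists (a :: t); split => //=.
- by move=> x; rewrite inE => /orP[/eqP->|/Ht1].
rewrite -Ht3 -(refl_conj _ (orth_refl a0)) refl_tr.
by rewrite !mulmxA refl_invol // mul1mx.
Qed.

Lemma shorter s : {subset s <= Delta} -> (nN (prodw s) < size s)%N ->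
  exists t, [/\ {subset t <= Delta}, (size t < size s)%N & prodw t = prodw s].
Proof.
elim: s => [|a s IH] Hs //= Hlt.
have Ha : a \in Delta by apply: Hs; rewrite inE eqxx.
have Hs' : {subset s <= Delta} by move=> x Hx; apply: Hs; rewrite inE Hx orbT.
have HM := prodw_good Hs'.
case: (ltnP (nN (prodw s)) (size s)) => Hc.
  have [t [Ht1 Ht2 Ht3]] := IH Hs' Hc.
  exists (a :: t); split => //=; last by rewrite Ht3.
  by move=> x; rewrite inE => /orP[/eqP->|/Ht1].
have HS := nN_simple Ha HM.
have aPhi := D_sub Ha.
have [_ _ HMt] := HM.
have [HMa|HMa] := pos_or_neg (HMt a aPhi); last first.
- have [t [Ht1 Ht2 Ht3]] := deletion Hs' (simple_pos Ha) HMa.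
  by exists t; split => //; exact: (ltn_trans Ht2 (ltnSn _)).
exfalso; move: HS; have -> : pb (pos ((prodw s)^T *m a)) = true by apply/pbP.
have -> : pb (N_set Phi Delta (prodw s) a) = false.
  apply/pbP; rewrite Nset_good // => -[_ H]; exact: pos_neg_excl HMa H.
move: Hlt Hc => /=; lia.
Qed.

Definition sw w := exists s, {subset s <= Delta} /\ w = prodw s.

Lemma cox_nN w k : cox_length Delta w k -> k = nN w.
Proof.
move=> [[s [Hsz Hs Hw]] Hmin].
have Hw' : w = prodw s by [].
have := nN_le Hs; rewrite -Hw' Hsz => Hle.
case: (ltnP (nN w) k) => Hlt; last by apply/eqP; rewrite eqn_leq Hle Hlt.
have Hlt' : (nN (prodw s) < size s)%N by rewrite -Hw' Hsz.
have [t [Ht1 Ht2 Ht3]] := shorter Hs Hlt'.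
have := Hmin (size t) (ex_intro _ t (And3 erefl Ht1 (etrans Hw' (esym Ht3)))).
by rewrite -Hsz leqNgt Ht2.
Qed.

Lemma cox_sw w : sw w -> cox_length Delta w (nN w).
Proof.
move=> [s [Hs Hw]].
have Hex : exists k, pb (simple_word Delta w k).
  by exists (size s); apply/pbP; exists s; split.
have [k /pbP Hk Hmin] := ex_minnP Hex.
have Hc : cox_length Delta w k.
  by split => // k' Hk'; apply: Hmin; apply/pbP.
by rewrite -(cox_nN Hc).
Qed.


Lemma sw1 : sw 1%:M. Proof. by exists [::]. Qed.
Lemma swM u w : sw u -> sw w -> sw (u *m w).
Proof.
move=> [s [Hs ->]] [t [Ht ->]]; exists (s ++ t); split; last by rewrite prodw_cat.
by move=> x; rewrite mem_cat => /orP[/Hs|/Ht].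
Qed.
Lemma sw_tr u : sw u -> sw u^T.
Proof. by move=> [s [Hs ->]]; exists (rev s); split; [move=> x; rewrite mem_rev => /Hs|rewrite prodw_tr]. Qed.
Lemma sw_refl a : a \in Delta -> sw (refl a).
Proof.
by move=> Ha; exists [:: a]; split; [move=> x; rewrite inE => /eqP-> | rewrite /= mulmx1].
Qed.

Lemma refl_pos_conj N b (c : nat -> nat) : pos b -> b = \sum_(i < m) (c i)%:R *: Delta`_i ->
  (\sum_(i < m) c i < N)%N ->
  exists u a, [/\ sw u, a \in Delta & refl b = u *m refl a *m u^T].
Proof.
elim: N b c => [|N IH] b c Hb Eb //.
move=> HN.
case: (boolP (b \in Delta)) => HbD.
  by exists 1%:M, b; split => //; [exact: sw1 | rewrite mul1mx trmx1 mulmx1].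
have bPhi := pos_Phi Hb; have b0 := Phi_neq0 bPhi.
have Hdot : 0 < dot b b by exact: dot_gt0.
have [i Hi] : exists i : 'I_m, 0 < (c i)%:R * dot Delta`_i b.
  case: (boolP [exists i : 'I_m, 0 < (c i)%:R * dot Delta`_i b]) => [/existsP//|/existsPn H].
  exfalso; move: Hdot; rewrite {1}Eb dot_sum.
  under eq_bigr do rewrite dotZl.
  have : \sum_(i < m) (c i)%:R * dot Delta`_i b <= 0.
    by apply: sumr_le0 => i _; rewrite leNgt; exact: H.
  by move=> H1 H2; have := lt_le_trans H2 H1; rewrite ltxx.
set a := Delta`_i.
have aD : a \in Delta by rewrite mem_nth.
have aPhi := D_sub aD; have a0 := Phi_neq0 aPhi.
have c0 : (0 : R) < (c i)%:R.
  by rewrite ltr0n lt0n; apply: contraTneq Hi => ->; rewrite mul0r ltxx.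
have Hdab : 0 < dot a b by move: Hi; rewrite pmulr_rgt0 // dotC.
set k := 2 / dot a a * dot a b.
have kpos : 0 < k by rewrite /k mulr_gt0 // divr_gt0 // dot_gt0.
have [z Hz] := Phi_cryst aPhi bPhi.
have Ekz : k = z%:~R by rewrite -Hz /k dotC mulrAC.
have [p Ep] : exists p : nat, z = p%:Z.
  case: z Hz Ekz => [p|p] _ Ekz; first by exists p.
  by exfalso; move: kpos; rewrite Ekz ltr0z.
have p1 : (0 < p)%N by move: kpos; rewrite Ekz Ep ltr0z.
have Hba : b != a by apply: contraNneq HbD => ->.
have Hb' := simple_refl_pos aD Hb Hba.
have [d Ed] := Hb'.2.
have Eq : \sum_(j < m) ((d j)%:R + (if (j : nat) == i then k else 0)) *: Delta`_j
        = \sum_(j < m) (c j)%:R *: Delta`_j.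
  under eq_bigr do rewrite scalerDl.
  rewrite big_split /= -Ed -D_single // -Eb refl_mul /a.
  by rewrite -/k subrK.
have Hsum : (\sum_(j < m) d j + p = \sum_(j < m) c j)%N.
  apply/eqP; rewrite -(eqr_nat R) natrD !natr_sum; apply/eqP.
  have Hj := fun j : 'I_m => @D_CM (fun j => (d j)%:R + (if j == i then k else 0)) (fun j => (c j)%:R) Eq j (ltn_ord j).
  rewrite -[RHS](eq_bigr _ (fun j _ => Hj j)) big_split /=.
  congr (_ + _); rewrite (bigD1 i) //= eqxx big1 ?addr0 ?Ekz ?Ep //.
  by move=> j /negbTE; rewrite -val_eqE => ->.
have HN' : (\sum_(j < m) d j < N)%N by move: HN Hsum; lia.
have [u [a' [Hu Ha' Eu]]] := IH _ _ Hb' Ed HN'.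
exists (refl a *m u), a'; split => //.
  by apply: swM => //; exact: sw_refl.
have Hc := refl_conj b (orth_refl a0); rewrite refl_tr in Hc.
rewrite trmx_mul refl_tr.
have -> : refl a *m u *m refl a' *m (u^T *m refl a) = refl a *m (u *m refl a' *m u^T) *m refl a by rewrite !mulmxA.
by rewrite -Eu -Hc !mulmxA refl_invol // mul1mx -mulmxA refl_invol // mulmx1.
Qed.

Lemma in_W_sw w : in_W Phi w -> sw w.
Proof.
elim=> [|a M Ha _ IH]; first exact: sw1.
apply: swM => //.
have [Hp|Hn] := pos_or_neg Ha.
  have [c Ec] := Hp.2.
  have [u [a' [Hu Ha' ->]]] := @refl_pos_conj (\sum_(i < m) c i).+1 a c Hp Ec (ltnSn _).
  by apply: swM; [apply: swM => //; exact: sw_refl | exact: sw_tr].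
have [c Ec] := Hn.2.
rewrite -reflN.
have [u [a' [Hu Ha' ->]]] := @refl_pos_conj (\sum_(i < m) c i).+1 (- a) c Hn Ec (ltnSn _).
by apply: swM; [apply: swM => //; exact: sw_refl | exact: sw_tr].
Qed.

Lemma edge_nN u v : Wgood u -> bruhat_edge Phi Delta u v ->
  Wgood v /\ (nN u < nN v)%N.
Proof.
move=> Hu [al [Hal Ev Hneg]].
have alPhi := pos_Phi Hal; have al0 := Phi_neq0 alPhi.
have Hv : Wgood v by rewrite Ev; exact: Wgood_refl.
split => //.
have [ou uPhi utPhi] := Hu.
pose x := u^T.
pose f := fun b : V => refl al *m b.
have ff : forall b, f (f b) = b by move=> b; rewrite /f mulmxA refl_invol // mul1mx.
have fPhi : forall b, b \in Phi -> f b \in Phi by move=> b; exact: refl_Phi.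
have vT : v^T = x *m refl al by rewrite Ev trmx_mul refl_tr.
have Hxal : pos (x *m al).
  move: Hneg; rewrite Ev orth_inv; last by case: Hv; rewrite Ev.
  by rewrite trmx_mul refl_tr -mulmxA refl_self // mulmxN negN.
have EA : forall b, N_set Phi Delta v b <-> pos b /\ neg (x *m f b).
  by move=> b; rewrite Nset_good // vT mulmxA.
have EB : forall b, N_set Phi Delta u b <-> pos b /\ neg (x *m b).
  by move=> b; rewrite Nset_good.
pose A := fun b => pb (N_set Phi Delta v b).
pose B := fun b => pb (N_set Phi Delta u b).
pose phi := fun b => if pb (pos (f b)) then f b else b.
have Aal : A al.
  apply/pbP; rewrite EA; split => //.
  by rewrite /f refl_self // mulmxN negN.
have phiA : forall b, b \in Phi -> B b -> A (phi b) /\ phi b != al.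
  move=> b bPhi /pbP; rewrite EB => -[Hbp Hbn].
  rewrite /phi; case: pbP => Hfb.
    split; first by apply/pbP; rewrite EA ff.
    apply/eqP => E; have : b = - al by rewrite -(ff b) E /f refl_self.
    move=> Eb; rewrite Eb in Hbp; exact: pos_neg_excl Hal Hbp.
  split; last first.
    by apply/eqP => E; rewrite E in Hbn; exact: pos_neg_excl Hxal Hbn.
  apply/pbP; rewrite EA; split => //.
  set k := 2 / dot al al * dot al b.
  have Efb : f b = b - k *: al by rewrite /f refl_mul.
  have Hfn : neg (f b) by case: (pos_or_neg (fPhi b bPhi)).
  have kge0 : 0 <= k.
    case: (leP 0 k) => // klt; exfalso.
    have C1 : cone (k *: al).
      have -> : k *: al = b + - f b by rewrite Efb opprB addrC subrK.
      by apply: cone_add; [exact: pos_cone | exact: pos_cone Hfn].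
    have C2 : cone (- (k *: al)).
      by rewrite -scaleNr; apply: cone_scale; [rewrite oppr_ge0 ltW | exact: pos_cone].
    have := cone_anti C1 C2 => /eqP; rewrite scaler_eq0 (negbTE al0) orbF => /eqP k0.
    by move: klt; rewrite k0 ltxx.
  apply: cone_pos.
    by apply: PhiN; apply: utPhi; exact: fPhi.
  have -> : - (x *m f b) = - (x *m b) + k *: (x *m al).
    by rewrite Efb mulmxBr opprB addrC scalemxAr.
  apply: cone_add; first exact: pos_cone Hbn.
  by apply: cone_scale => //; exact: pos_cone.
have phiPhi : forall b, b \in Phi -> phi b \in Phi.
  by move=> b bPhi; rewrite /phi; case: pbP => _ //; exact: fPhi.
have phiinj : {in filter B Phi &, injective phi}.
  move=> b1 b2; rewrite !mem_filter => /andP[/pbP H1 P1] /andP[/pbP H2 P2].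
  rewrite EB in H1; rewrite EB in H2.
  rewrite /phi; case: pbP => F1; case: pbP => F2.
  - by move=> E; rewrite -(ff b1) E ff.
  - move=> E; exfalso; have Fb2 : f b2 = b1 by rewrite -E ff.
    case: (pos_or_neg (fPhi b2 P2)) => // Hn; rewrite Fb2 in Hn; exact: pos_neg_excl H1.1 Hn.
  - move=> E; exfalso; have Fb1 : f b1 = b2 by rewrite E ff.
    case: (pos_or_neg (fPhi b1 P1)) => // Hn; rewrite Fb1 in Hn; exact: pos_neg_excl H2.1 Hn.
  - by [].
have Hle : (count B Phi <= count (predI A (predC1 al)) Phi)%N.
  rewrite -size_filter -(size_map phi) -size_filter.
  apply: uniq_leq_size.
    by rewrite map_inj_in_uniq //; apply: filter_uniq; exact: Phi_uniq.
  move=> y /mapP[b]; rewrite mem_filter => /andP[Bb bPhi] ->.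
  have [HA Hne] := phiA b bPhi Bb.
  by rewrite mem_filter /= HA Hne phiPhi.
have HA1 := @count_1pt _ Phi al A (predI A (predC1 al)) Phi_uniq alPhi.
have : (count A Phi + (predI A (predC1 al)) al = count (predI A (predC1 al)) Phi + A al)%N.
  by apply: HA1 => y _ Hy; rewrite /= Hy andbT.
rewrite /= eqxx andbF Aal addn0 => E.
by rewrite /nN -/A -/B E addn1 ltnS.
Qed.

Lemma clos_nN u v : Wgood u -> clos_trans _ (bruhat_edge Phi Delta) u v ->
  Wgood v /\ (nN u < nN v)%N.
Proof.
move=> Hu H; elim: H Hu => [x y Hxy|x y z _ IH1 _ IH2] Hx; first exact: edge_nN.
have [Hy Hxy] := IH1 Hx; have [Hz Hyz] := IH2 Hy.
by split => //; exact: ltn_trans Hxy Hyz.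
Qed.

Lemma inv_b0 w (g b : V) : Wgood w -> (invmx w *m b = - g <-> b = - (w *m g)).
Proof.
move=> [[o1 o2] _ _]; rewrite orth_inv //; split => [E|->].
  by rewrite -[b]mul1mx -o2 -mulmxA E mulmxN.
by rewrite mulmxN mulmxA o1 mul1mx.
Qed.

Lemma Ng_b0 w g : Wgood w -> ~ Ng_set Phi Delta g w (- (w *m g)).
Proof.
move=> Hw [_ [_ /eqP]]; apply; have := (inv_b0 g (- (w *m g)) Hw).2 erefl.
by move=> ->; rewrite opprK.
Qed.

Lemma ell_eps w g : Wgood w -> g \in Phi ->
  nN w = (ell_g Phi Delta g w + pb (N_set Phi Delta w (- (w *m g))))%N.
Proof.
move=> Hw gPhi.
have [_ wPhi _] := Hw.
have b0Phi : - (w *m g) \in Phi by apply: PhiN; exact: wPhi.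
rewrite /ell_g /nN.
have := @count_1pt _ Phi (- (w *m g)) (fun b => pb (Ng_set Phi Delta g w b))
   (fun b => pb (N_set Phi Delta w b)) Phi_uniq b0Phi.
have -> : pb (Ng_set Phi Delta g w (- (w *m g))) = false by apply/pbP; exact: Ng_b0.
rewrite addn0 => <- //.
move=> x _ Hx; apply: pb_eq; split.
  by move=> [H1 [H2 _]]; split.
move=> [H1 H2]; split => //; split => //.
apply/eqP => E; move/eqP: Hx; apply; apply/(inv_b0 g x Hw).
by rewrite -E opprK.
Qed.

Lemma main_sec g v w :
  highest_root Phi Delta g ->
  in_W Phi v -> in_W Phi w ->
  bruhat_lt Phi Delta w v ->
  (ell_g Phi Delta g w = ell_g Phi Delta g v <->
   [/\ is_cover Phi Delta w v,
       (forall b, N_set Phi Delta w b <-> Ng_set Phi Delta g w b) &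
       (exists2 b, N_set Phi Delta v b & invmx v *m b = - g)]).
Proof.
move=> [Hgp _] HvW HwW [_ Hlt].
have gPhi := pos_Phi Hgp.
have Hv := in_W_good HvW; have Hw := in_W_good HwW.
have Cv := cox_sw (in_W_sw HvW); have Cw := cox_sw (in_W_sw HwW).
have [_ Hnlt] := clos_nN Hw Hlt.
have Ew := ell_eps Hw gPhi; have Ev := ell_eps Hv gPhi.
have Hall : (forall b, N_set Phi Delta w b <-> Ng_set Phi Delta g w b) <->
            ~ N_set Phi Delta w (- (w *m g)).
  split.
    by move=> H /H; exact: Ng_b0.
  move=> Hn b; split; last by move=> [H1 [H2 _]]; split.
  move=> [H1 H2]; split => //; split => //.
  apply/eqP => E; apply: Hn; have -> : - (w *m g) = b.
    by apply/esym/(inv_b0 g b Hw); rewrite -E opprK.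
  by split.
have Hex : (exists2 b, N_set Phi Delta v b & invmx v *m b = - g) <->
           N_set Phi Delta v (- (v *m g)).
  split; first by move=> [b Hb /(inv_b0 g b Hv) E]; rewrite -E.
  by move=> H; exists (- (v *m g)) => //; apply/(inv_b0 g _ Hv).
split.
- move=> Eell.
  move: Ew Ev Hnlt; rewrite Eell.
  case: pbP => Hnw; case: pbP => Hnv => Ew Ev Hnlt; try (exfalso; lia).
  split; [|exact: Hall.2 Hnw|exact: Hex.2 Hnv].
  split; last by exists (nN w); have -> : (nN w).+1 = nN v by move: Ew Ev => /=; lia.
  have H := clos_trans_t1n _ _ _ _ Hlt.
  inversion H as [? Hy0|y ? Hy Hyv]; first by [].
  exfalso.
  have [Hyg Hwy] := edge_nN Hw Hy.
  have [_ Hyv'] := clos_nN Hyg (clos_t1n_trans _ _ _ _ Hyv).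
  move: Hwy Hyv' Hnlt Ev Ew => /=. lia.
- move=> [[_ [k [Ck Ck1]]] /Hall.1 Hnw /Hex.1 Hnv].
  have E1 := cox_nN Ck; have E2 := cox_nN Ck1.
  have F1 : pb (N_set Phi Delta w (- (w *m g))) = false by apply/pbP.
  have F2 : pb (N_set Phi Delta v (- (v *m g))) = true by apply/pbP.
  move: Ew Ev; rewrite F1 F2 -E1 -E2 => Ew Ev.
  lia.
Qed.

End Roots.

Theorem lemma3p1 (R : realType) (n : nat) (Phi Delta : seq 'cV[R]_n)
    (g : 'cV[R]_n) (v w : 'M[R]_n) :
  root_system Phi -> irreducible_rs Phi -> is_base Phi Delta ->
  highest_root Phi Delta g ->
  in_W Phi v -> in_W Phi w ->
  bruhat_lt Phi Delta w v ->
  (ell_g Phi Delta g w = ell_g Phi Delta g v <->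
   [/\ is_cover Phi Delta w v,
       (forall b, N_set Phi Delta w b <-> Ng_set Phi Delta g w b) &
       (exists2 b, N_set Phi Delta v b & invmx v *m b = - g)]).
Proof.
move=> HPhi _ HD; exact: main_sec.
Qed.
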